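(* Any algorithm that returns islands compatible with those returned by overlap-greedy has approximation ratio $\Omega(\max\{\mathrm{Opt}_{\mathrm{P}},\sqrt{n}\})$. That is, there exist a constant $c>0$ and inputs $S$ with arbitrarily large $n$ and arbitrarily large $\mathrm{Opt}_{\mathrm{P}}(S)$ such that, if $I_1,\dots,I_m$ are the islands returned by overlap-greedy on $S$, every set of islands compatible with $I_1,\dots,I_m$ has cardinality at least $c\cdot\max\{\mathrm{Opt}_{\mathrm{P}}(S),\sqrt{n}\}\cdot \mathrm{Opt}_{\mathrm{P}}(S)$.
   Context: The input is a set $S$ of $n$ points in the plane, each having one of $k\ge 2$ colors. A set of points is monochromatic if all its points have the same color. An island is a subset $I\subseteq S$ with $\mathrm{CH}(I)\cap S=I$, where $\mathrm{CH}(I)$ is the convex hull of $I$. An island partition of $S$ is a partition of $S$ into monochromatic islands whose convex hulls are pairwise disjoint; $\mathrm{Opt}_{\mathrm{P}}(S)$ denotes its minimum possible cardinality. Overlap-greedy computes an island cover (islands may overlap): it repeatedly chooses a monochromatic island covering the maximum number of not-yet-covered points of $S$, breaking ties by choosing an island covering the fewest previously covered points, until all of $S$ is covered; it returns the chosen islands $I_1,\dots,I_m$ in order. Families $\mathcal{I}'_1,\dots,\mathcal{I}'_m$ of islands are compatible with islands $I_1,\dots,I_m$ if (i) $\bigcup_k\bigcup\mathcal{I}'_k=\bigcup_i I_i$, (ii) $\bigcup\mathcal{I}'_i\subseteq I_i$ for every $i$, and (iii) the islands in $\bigcup_k\mathcal{I}'_k$ are pairwise disjoint (their convex hulls are pairwise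 disjoint). Islands $I'_1,\dots,I'_{m'}$ are compatible with $I_1,\dots,I_m$ if $\{I'_1,\dots,I'_{m'}\}$ can be partitioned into families compatible with $I_1,\dots,I_m$. *)

(* Defs.v *)
(* points of the plane have coordinates in an arbitrary
   R : realType; the input S is given by an injective map p : 'I_n -> R * R
   (so S has exactly n distinct points) and colours col : 'I_n -> 'I_k. *)
From HB Require Import structures.
From mathcomp Require Import all_boot all_order all_algebra.
From mathcomp Require Import reals.
Set Implicit Arguments. Unset Strict Implicit. Unset Printing Implicit Defensive.
Import Order.TTheory GRing.Theory Num.Theory.
Local Open Scope ring_scope.

Section Islands.
Variables (R : realType) (n k : nat) (p : 'I_n -> R * R) (col : 'I_n -> 'I_k).

Definition in_hull (I : {set 'I_n}) (q : R * R) : Prop :=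
  exists w : 'I_n -> R,
    (forall i, 0 <= w i) /\ (forall i, i \notin I -> w i = 0) /\
    \sum_i w i = 1 /\
    \sum_i w i * (p i).1 = q.1 /\ \sum_i w i * (p i).2 = q.2.

Definition hulls_disjoint (I J : {set 'I_n}) : Prop :=
  ~ exists q, in_hull I q /\ in_hull J q.

Definition monochromatic (I : {set 'I_n}) : Prop :=
  forall i j, i \in I -> j \in I -> col i = col j.

Definition island (I : {set 'I_n}) : Prop :=
  forall j, in_hull I (p j) -> j \in I.

Definition mono_island (I : {set 'I_n}) : Prop := monochromatic I /\ island I.

Definition island_partition (P : {set {set 'I_n}}) : Prop :=
  partition P [set: 'I_n] /\
  (forall I, I \in P -> mono_island I) /\
  (forall I J, I \in P -> J \in P -> I != J -> hulls_disjoint I J).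

Definition is_OptP (m : nat) : Prop :=
  (exists P, island_partition P /\ #|P| = m) /\
  (forall P, island_partition P -> (m <= #|P|)%N).

Definition covered (Is : seq {set 'I_n}) (t : nat) : {set 'I_n} :=
  \bigcup_(J <- take t Is) J.

(* Is = [:: I_1; ...; I_m] is a possible output of overlap-greedy
   (any tie-breaking beyond the stated rule is allowed) *)
Definition overlap_greedy_output (Is : seq {set 'I_n}) : Prop :=
  (forall t, (t < size Is)%N ->
     let C := covered Is t in
     let I := nth set0 Is t in
     C != [set: 'I_n] /\ mono_island I /\
     (forall J, mono_island J ->
        (#|J :\: C| <= #|I :\: C|)%N /\
        (#|J :\: C| = #|I :\: C| -> (#|I :&: C| <= #|J :&: C|)%N))) /\
  covered Is (size Is) = [set: 'I_n].

Definition compatible (Q : {set {set 'I_n}}) (Is : seq {set 'I_n}) : Prop :=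
  (forall J, J \in Q -> island J) /\
  exists F : nat -> {set {set 'I_n}},
    Q = \bigcup_(t < size Is) F t /\
    (forall s t, (s < size Is)%N -> (t < size Is)%N -> s != t ->
       [disjoint F s & F t]) /\
    \bigcup_(t < size Is) \bigcup_(J in F t) J = \bigcup_(I <- Is) I /\
    (forall t, (t < size Is)%N -> \bigcup_(J in F t) J \subset nth set0 Is t) /\
    (forall J K, J \in Q -> K \in Q -> J != K -> hulls_disjoint J K).

End Islands.

(* Main.v *)
Require Import Defs.
From HB Require Import structures.
From mathcomp Require Import all_boot all_order all_algebra.
From mathcomp Require Import reals.
From mathcomp Require Import ring lra zify.
From Stdlib Require Import Classical.
Import Order.TTheory GRing.Theory Num.Theory.
Local Open Scope ring_scope.
Set Implicit Arguments. Unset Strict Implicit. Unset Printing Implicit Defensive.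
Section Hull.
Variables (R : realType) (n : nat) (p : 'I_n -> R * R).

Lemma hull_pt (I : {set 'I_n}) i : i \in I -> in_hull p I (p i).
Proof.
move=> iI; exists (fun j => (j == i)%:R); split; [|split; [|split; [|split]]].
- by move=> j; rewrite ler0n.
- by move=> j jI; case: eqP => // E; rewrite E iI in jI.
- by rewrite (bigD1 i) //= eqxx big1 ?addr0 // => j /negbTE ->.
- by rewrite (bigD1 i) //= eqxx mul1r big1 ?addr0 // => j /negbTE ->; rewrite mul0r.
- by rewrite (bigD1 i) //= eqxx mul1r big1 ?addr0 // => j /negbTE ->; rewrite mul0r.
Qed.

Lemma hull_conv (I : {set 'I_n}) q1 q2 (l : R) :
  in_hull p I q1 -> in_hull p I q2 -> 0 <= l -> l <= 1 ->
  in_hull p I (l * q1.1 + (1 - l) * q2.1, l * q1.2 + (1 - l) * q2.2).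
Proof.
move=> [w1 [w1p [w1z [w1s [w1x w1y]]]]] [w2 [w2p [w2z [w2s [w2x w2y]]]]] l0 l1.
exists (fun j => l * w1 j + (1 - l) * w2 j); split; [|split; [|split; [|split]]].
- move=> j; apply: addr_ge0; apply: mulr_ge0 => //; lra.
- by move=> j jI; rewrite w1z // w2z // !mulr0 addr0.
- by rewrite big_split /= -!mulr_sumr w1s w2s; lra.
- rewrite /= -w1x -w2x !mulr_sumr -big_split /=; apply: eq_bigr => j _; lra.
- rewrite /= -w1y -w2y !mulr_sumr -big_split /=; apply: eq_bigr => j _; lra.
Qed.

Lemma hull_lin (I : {set 'I_n}) q (a b g : R) :
  in_hull p I q -> (forall i, i \in I -> a * (p i).1 + b * (p i).2 <= g) ->
  a * q.1 + b * q.2 <= g.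
Proof.
move=> [w [wp [wz [ws [wx wy]]]]] H.
rewrite -wx -wy !mulr_sumr -big_split /=.
have -> : g = \sum_i w i * g by rewrite -mulr_suml ws mul1r.
apply: ler_sum => j _.
case: (boolP (j \in I)) => jI.
  have := H j jI; have := wp j; nra.
by rewrite wz // !mul0r; lra.
Qed.

Lemma hull_eq1 (I : {set 'I_n}) q c :
  in_hull p I q -> (forall i, i \in I -> (p i).1 = c) -> q.1 = c.
Proof.
move=> h H; apply/eqP; rewrite eq_le; apply/andP; split.
- have := hull_lin (a := 1) (b := 0) (g := c) h; rewrite !mul1r mul0r addr0; apply.
  by move=> i /H ->; rewrite mul1r mul0r addr0.
- have := hull_lin (a := -1) (b := 0) (g := - c) h; rewrite mul0r addr0 mulN1r lerN2; apply.
  by move=> i /H ->; rewrite mulN1r mul0r addr0.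
Qed.

Lemma hull_eq2 (I : {set 'I_n}) q c :
  in_hull p I q -> (forall i, i \in I -> (p i).2 = c) -> q.2 = c.
Proof.
move=> h H; apply/eqP; rewrite eq_le; apply/andP; split.
- have := hull_lin (a := 0) (b := 1) (g := c) h; rewrite !mul1r mul0r add0r; apply.
  by move=> i /H ->; rewrite mul1r mul0r add0r.
- have := hull_lin (a := 0) (b := -1) (g := - c) h; rewrite mul0r add0r mulN1r lerN2; apply.
  by move=> i /H ->; rewrite mulN1r mul0r add0r.
Qed.

End Hull.

Lemma mem_covered (n : nat) (Is : seq {set 'I_n}) t x :
  reflect (exists2 t', (t' < minn t (size Is))%N & x \in nth set0 Is t')
          (x \in covered Is t).
Proof.
rewrite /covered bigcup_seq; apply: (iffP bigcupP).
- move=> [J /(nthP set0) [t' lt' <-] xJ].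
  have lt2 : (t' < minn t (size Is))%N by move: lt'; rewrite size_take_min minnC.
  exists t' => //; move: xJ; rewrite nth_take //.
  by rewrite (leq_trans lt2) // geq_minl.
- move=> [t' lt' xt']; exists (nth set0 Is t') => //.
  apply/(nthP set0); exists t'; first by rewrite size_take_min.
  by rewrite nth_take // (leq_trans lt') // geq_minl.
Qed.
Section Arith.
Local Open Scope nat_scope.
Lemma arith_const (F : nat -> nat) (L B : nat) :
  (forall k, k + 2 <= L -> 2 * F k.+1 = F k + F k.+2) ->
  (forall k, k <= L -> F k <= B) -> B < L -> 1 <= L ->
  forall k, k <= L -> F k = F 0.
Proof.
move=> rec bnd BL L1.
have key : forall k, k + 1 <= L -> F k + k * F 0 = F 0 + k * F 1 /\
                     F k.+1 + k.+1 * F 0 = F 0 + k.+1 * F 1.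
  elim=> [|k IH] kL; first by split; lia.
  have [h1 h2] := IH (ltnW kL).
  split => //.
  have r : 2 * F k.+1 = F k + F k.+2 by apply: rec; lia.
  nia.
have [_ hL] : _ := key L.-1 ltac:(lia).
have eL : L.-1.+1 = L by lia.
rewrite eL in hL.
have bL := bnd L (leqnn L); have b0 := bnd 0 (leq0n L).
have e01 : F 1 = F 0 by nia.
move=> k kL; case: k kL => [|k] kL //.
have [_ hk] : _ := key k ltac:(lia).
rewrite e01 in hk; lia.
Qed.
End Arith.


Section Constr.
Variables (R : realType) (M : nat).
Definition X := (4 * M.+1).+1.
Definition PT := (('I_M.+1 * 'I_X) + ('I_M.+1 * 'I_M.+2))%type.
Definition nn := #|{: PT}|.
Definition pt (i : 'I_nn) : PT := enum_val i.
Definition idx (q : PT) : 'I_nn := enum_rank q.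
Lemma ptK q : pt (idx q) = q. Proof. exact: enum_rankK. Qed.
Lemma idxK i : idx (pt i) = i. Proof. exact: enum_valK. Qed.

Definition lev (q : PT) : nat :=
  match q with inl (a, _) => (2 * a + 2)%N | inr (_, j) => (2 * j + 1)%N end.
Definition coord (q : PT) : R * R :=
  match q with
  | inl (a, x) => ((x : nat)%:R, (lev q)%:R)
  | inr (s, j) => ((4 * s)%:R + 2^-1, (lev q)%:R)
  end.
Definition pp (i : 'I_nn) := coord (pt i).
Definition colr (q : PT) : 'I_M.+2 :=
  match q with inl (a, _) => inord a.+1 | inr _ => ord0 end.
Definition cc (i : 'I_nn) := colr (pt i).

Lemma pp2 i : (pp i).2 = (lev (pt i))%:R.
Proof. by rewrite /pp; case: (pt i) => [[a x]|[s j]]. Qed.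

Lemma cc0 i : cc i = ord0 -> exists s j, pt i = inr (s, j).
Proof.
rewrite /cc; case: (pt i) => [[a x]|[s j]] /=; last by exists s, j.
by move/(congr1 val) => /=; rewrite inordK // ltnS ltn_ord.
Qed.

Lemma ccred a x : cc (idx (inl (a, x))) != ord0.
Proof. by rewrite /cc ptK /=; apply/eqP => /(congr1 val) => /=; rewrite inordK // ltnS ltn_ord. Qed.

Lemma blue_x i s j : pt i = inr (s, j) -> (pp i).1 = (4 * s)%:R + 2^-1.
Proof. by rewrite /pp => ->. Qed.

Lemma blue_bound (J : {set 'I_nn}) q : in_hull pp J q ->
  (forall i, i \in J -> cc i = ord0) -> 0 <= q.1 /\ q.1 <= (4 * M.+1)%:R.
Proof.
move=> h bl; split.
- have := hull_lin (a := -1) (b := 0) (g := 0) h; rewrite mul0r addr0.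
  move=> H; suff: -1 * q.1 <= 0 by lra.
  apply: H => i /bl /cc0 [s [j /blue_x ->]].
  have : (0 : R) <= (4 * s)%:R by rewrite ler0n.
  have : (0 : R) < 2^-1 by rewrite invr_gt0 ltr0n. lra.
- have := hull_lin (a := 1) (b := 0) (g := (4 * M.+1)%:R) h; rewrite mul0r addr0 mul1r.
  apply => i /bl /cc0 [s [j /blue_x ->]]; rewrite mul0r addr0 mul1r.
  have : (4 * s)%:R <= (4 * M)%:R :> R by rewrite ler_nat leq_mul2l /= -ltnS.
  have : (2^-1 : R) <= 1 by rewrite invf_le1 ?ler1n ?ltr0n.
  rewrite !natrM -addn1 natrD; lra.
Qed.

Lemma redblock (J : {set 'I_nn}) q1 q2 (a : nat) :
  island pp J -> (forall i, i \in J -> cc i = ord0) ->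
  in_hull pp J q1 -> in_hull pp J q2 -> (a <= M)%N ->
  q1.2 = (2 * a + 2)%:R -> q2.2 = (2 * a + 2)%:R -> q1.1 + 1 <= q2.1 -> False.
Proof.
move=> isl bl h1 h2 aM y1 y2 d12.
have [b10 b11] := blue_bound h1 bl; have [b20 b21] := blue_bound h2 bl.
set m := Num.ceil q1.1.
have m1 := ceil_ge q1.1; have m2 := ceilB1_lt q1.1.
rewrite -/m in m1 m2.
have m0 : (0 <= m)%R by rewrite /m ceil_ge0; lra.
pose mn := `|m|%N.
have emn : (mn%:R : R) = m%:~R by rewrite /mn -[in RHS](gez0_abs m0) pmulrn.
have mnX : (mn < X)%N.
  rewrite /X ltnS -(ler_nat R) emn.
  have : (m - 1)%:~R = m%:~R - 1 :> R by rewrite rmorphB.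
  lra.
pose r := idx (inl (inord a, Ordinal mnX)).
have pr : pp r = (mn%:R, (2 * a + 2)%:R) by rewrite /pp /r ptK /= inordK.
have : in_hull pp J (pp r).
  pose l := (q2.1 - mn%:R) / (q2.1 - q1.1).
  have l0 : 0 <= l.
    rewrite /l divr_ge0 //; lra.
  have l1 : l <= 1.
    rewrite /l ler_pdivrMr; lra.
  have := hull_conv h1 h2 l0 l1; congr in_hull.
  rewrite pr y1 y2; congr pair; last by lra.
  rewrite /l; field; lra.
move/isl => /(bl r); apply/eqP; exact: ccred.
Qed.


Lemma blue_pp i s j : pt i = inr (s, j) -> pp i = ((4 * s)%:R + 2^-1, (2 * j + 1)%:R).
Proof. by rewrite /pp => ->. Qed.

Lemma redblock2 (J : {set 'I_nn}) q1 q2 (a : nat) :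
  island pp J -> (forall i, i \in J -> cc i = ord0) ->
  in_hull pp J q1 -> in_hull pp J q2 -> (a <= M)%N ->
  q1.2 = (2 * a + 2)%:R -> q2.2 = (2 * a + 2)%:R ->
  (q1.1 + 1 <= q2.1) \/ (q2.1 + 1 <= q1.1) -> False.
Proof.
move=> isl bl h1 h2 aM y1 y2 [d|d].
  exact: (redblock isl bl h1 h2 aM y1 y2 d).
exact: (redblock isl bl h2 h1 aM y2 y1 d).
Qed.

Lemma core_tri (J : {set 'I_nn}) u v w (a : nat) xu xv xw y0 y1 :
  island pp J -> (forall i, i \in J -> cc i = ord0) ->
  u \in J -> v \in J -> w \in J -> (a <= M)%N ->
  pp u = (xu, y0) -> pp v = (xv, y0) -> pp w = (xw, y1) ->
  y1 != y0 ->
  0 <= ((2 * a + 2)%:R - y0) / (y1 - y0) <= 2^-1 ->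
  (xu + 2 <= xv) \/ (xv + 2 <= xu) -> False.
Proof.
move=> isl bl uJ vJ wJ aM eu ev ew y10 /andP [t0 t1] dx.
set t := ((2 * a + 2)%:R - y0) / (y1 - y0) in t0 t1.
have h21 : (2^-1 : R) <= 1 by rewrite invf_le1 ?ler1n ?ltr0n.
have t1' : t <= 1 by lra.
have hu := hull_pt pp uJ; have hv := hull_pt pp vJ; have hw := hull_pt pp wJ.
have hA := hull_conv hw hu t0 t1'; have hB := hull_conv hw hv t0 t1'.
rewrite eu ev ew /= in hA hB.
have ey : t * y1 + (1 - t) * y0 = (2 * a + 2)%:R.
  rewrite /t; field; by rewrite subr_eq0.
apply: (redblock2 isl bl hA hB aM) => //=.
have h2 : (2^-1 : R) + 2^-1 = 1 by field.
case: dx => dx; [left|right]; nra.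
Qed.

Lemma nat_apart (x y : nat) : x != y -> (x%:R + 1 <= y%:R :> R) \/ (y%:R + 1 <= x%:R :> R).
Proof.
case: (ltngtP x y) => // h _; [left|right]; by rewrite natr1 ler_nat.
Qed.

Lemma divNN (a b : R) : a / b = (- a) / (- b).
Proof. by rewrite invrN mulrNN. Qed.

Lemma lemT (J : {set 'I_nn}) u v w s1 s2 s3 j j3 :
  island pp J -> (forall i, i \in J -> cc i = ord0) ->
  u \in J -> v \in J -> w \in J ->
  pt u = inr (s1, j) -> pt v = inr (s2, j) -> pt w = inr (s3, j3) ->
  s1 != s2 -> j3 != j -> False.
Proof.
move=> isl bl uJ vJ wJ pu pv pw s12 j3j.
have eu := blue_pp pu; have ev := blue_pp pv; have ew := blue_pp pw.
have h2 : (2^-1 : R) + 2^-1 = 1 by field.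
have h2p : (0 : R) < 2^-1 by rewrite invr_gt0 ltr0n.
have dx : ((4 * s1)%:R + 2^-1 + 2 <= (4 * s2)%:R + 2^-1 :> R) \/
          ((4 * s2)%:R + 2^-1 + 2 <= (4 * s1)%:R + 2^-1 :> R).
  have : (s1 : nat) != s2 by [].
  move/nat_apart; rewrite !natrM; lra.
have jM : (j <= M.+1)%N by rewrite -ltnS ltn_ord.
have j3M : (j3 <= M.+1)%N by rewrite -ltnS ltn_ord.
case: (ltngtP j j3) => h.
-
  have hj : (j.+1%:R <= j3%:R :> R) by rewrite ler_nat.
  apply: (core_tri (a := j) isl bl uJ vJ wJ _ eu ev ew) => //.
  + by rewrite -ltnS (leq_trans h).
  + by rewrite eqr_nat; apply/eqP => /addIn /eqP; rewrite eqn_mul2l /= => /eqP E; rewrite E ltnn in h.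
  + rewrite -natr1 in hj; rewrite ?natrD ?natrM.
    apply/andP; split.
      apply: divr_ge0; lra.
    rewrite ler_pdivrMr; last by lra.
    lra.
-
  move: (h); case E: (j : nat) => [|j'] // h'.
  rewrite E in eu ev jM.
  have hj : (j3.+1%:R <= j'.+1%:R :> R) by rewrite ler_nat.
  apply: (core_tri (a := j') isl bl uJ vJ wJ _ eu ev ew) => //.
  + rewrite eqr_nat; apply/eqP => /addIn /eqP; rewrite eqn_mul2l /= => /eqP E3.
    by rewrite E3 ltnn in h'.
  + rewrite -!natr1 in hj; rewrite -[j'.+1]addn1 ?natrD ?natrM.
    rewrite divNN; apply/andP; split.
      apply: divr_ge0; lra.
    rewrite ler_pdivrMr; last by lra.
    lra.
- by move/eqP: j3j; apply; apply: val_inj; rewrite /= h.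
Qed.

Lemma lemZ (J : {set 'I_nn}) u v w s1 s2 s3 j1 j2 j3 :
  island pp J -> (forall i, i \in J -> cc i = ord0) ->
  u \in J -> v \in J -> w \in J ->
  pt u = inr (s1, j1) -> pt v = inr (s2, j2) -> pt w = inr (s3, j3) ->
  (j2 : nat) = j1.+1 -> (j3 : nat) = j1.+2 -> (2 * s2 = s1 + s3)%N.
Proof.
move=> isl bl uJ vJ wJ pu pv pw e2 e3.
apply/eqP; apply/negP => /negP ne.
have eu := blue_pp pu; have ev := blue_pp pv; have ew := blue_pp pw.
have E2 : ((2 * j2 + 1) = (2 * j1 + 1) + 2)%N by rewrite e2; lia.
have E3 : ((2 * j3 + 1) = (2 * j1 + 1) + 4)%N by rewrite e3; lia.
have E1 : ((2 * j1 + 2) = (2 * j1 + 1) + 1)%N by lia.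
rewrite E2 natrD in ev; rewrite E3 natrD in ew.
have hu := hull_pt pp uJ; have hv := hull_pt pp vJ; have hw := hull_pt pp wJ.
have t0 : (0 : R) <= 2^-1 by rewrite invr_ge0 ler0n.
have t1 : (2^-1 : R) <= 1 by rewrite invf_le1 ?ler1n ?ltr0n.
have f0 : (0 : R) <= 4^-1 by rewrite invr_ge0 ler0n.
have f1 : (4^-1 : R) <= 1 by rewrite invf_le1 ?ler1n ?ltr0n.
have hA := hull_conv hu hv t0 t1; have hB := hull_conv hw hu f0 f1.
rewrite eu ev ew /= in hA hB.
have jM : (j1 <= M)%N by have := ltn_ord j3; rewrite e3; lia.

apply: (redblock2 isl bl hA hB jM) => /=.
all: try (rewrite E1 natrD; field).
all: try done.
have := nat_apart ne; rewrite ?natrD ?natrM.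
have ex1 : 2^-1 * (((4 * s1)%:R : R) + 2^-1) + (1 - 2^-1) * ((4 * s2)%:R + 2^-1)
      - (4^-1 * ((4 * s3)%:R + 2^-1) + (1 - 4^-1) * ((4 * s1)%:R + 2^-1))
      = 2 * s2%:R - (s1%:R + s3%:R) by rewrite !natrM; field.
lra.
Qed.


Definition bcol (i : 'I_nn) : 'I_M.+1 :=
  match pt i with inr (s, _) => s | inl (a, _) => a end.
Definition blev (i : 'I_nn) : 'I_M.+2 :=
  match pt i with inr (_, j) => j | inl _ => ord0 end.
Definition colset (s : 'I_M.+1) : {set 'I_nn} := [set idx (inr (s, j)) | j : 'I_M.+2].

Lemma blue_pt (J : {set 'I_nn}) i : (forall i, i \in J -> cc i = ord0) -> i \in J ->
  pt i = inr (bcol i, blev i).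
Proof. by move=> bl /bl /cc0 [s [j E]]; rewrite /bcol /blev E. Qed.

Lemma idx_inj : injective idx. Proof. exact: (can_inj ptK). Qed.

Lemma card_colset s : #|colset s| = M.+2.
Proof.
rewrite card_imset ?card_ord // => j1 j2 /idx_inj [] //.
Qed.

Lemma BI (J : {set 'I_nn}) : island pp J -> (forall i, i \in J -> cc i = ord0) ->
  (M.+2 <= #|J|)%N -> exists s, J = colset s.
Proof.
move=> isl bl cJ.
have bp : forall i, i \in J -> pt i = inr (bcol i, blev i) by move=> i; exact: blue_pt.
have stepA : forall u v w, u \in J -> v \in J -> w \in J -> blev u = blev v ->
    blev w != blev u -> u = v.
  move=> u v w uJ vJ wJ luv lw.
  have pu := bp u uJ; have pv := bp v vJ; have pw := bp w wJ.
  case: (eqVneq (bcol u) (bcol v)) => cuv.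
    by rewrite -(idxK u) -(idxK v) pu pv cuv luv.
  rewrite -luv in pv.
  exfalso; exact: (lemT isl bl uJ vJ wJ pu pv pw cuv lw).
case: (boolP [forall u in J, forall v in J, blev u == blev v]) => hall.
  exfalso.
  have inj : {in J &, injective bcol}.
    move=> u v uJ vJ e.
    have /forall_inP/(_ v vJ)/eqP luv := (forall_inP hall) u uJ.
    by rewrite -(idxK u) -(idxK v) (bp u uJ) (bp v vJ) e luv.
  have e := card_in_imset inj.
  have := max_card [set bcol x | x in J]; rewrite card_ord e => h.
  by have := leq_trans cJ h; rewrite ltnn.
have [w1 w1J /forall_inPn [w2 w2J lw]] := forall_inPn hall.
have injl : {in J &, injective blev}.
  move=> u v uJ vJ e.
  case: (eqVneq (blev w1) (blev u)) => h.
    apply: (stepA u v w2) => //; by rewrite -h eq_sym.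
  by apply: (stepA u v w1).
have cl := card_in_imset injl.
have full : [set blev x | x in J] = [set: 'I_M.+2].
  by apply/eqP; rewrite eqEcard subsetT cardsT card_ord cl.
pose g (j : 'I_M.+2) := odflt w1 [pick u in J | blev u == j].
have gP : forall j, g j \in J /\ blev (g j) = j.
  move=> j; rewrite /g; case: pickP => [u /andP [uJ /eqP]| none] //=.
  have : j \in [set blev x | x in J] by rewrite full inE.
  by case/imsetP => u uJ E; move: (none u); rewrite uJ E eqxx.
pose F (k : nat) : nat := bcol (g (inord k)).
have rec : forall k, (k + 2 <= M.+1)%N -> (2 * F k.+1 = F k + F k.+2)%N.
  move=> k kL.
  have [g0J g0l] := gP (inord k); have [g1J g1l] := gP (inord k.+1).
  have [g2J g2l] := gP (inord k.+2).
  apply: (lemZ isl bl g0J g1J g2J (bp _ g0J) (bp _ g1J) (bp _ g2J));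
    rewrite ?g0l ?g1l ?g2l !inordK //; lia.
have bnd : forall k, (k <= M.+1)%N -> (F k <= M)%N.
  by move=> k _; rewrite /F -ltnS ltn_ord.
have cst := arith_const rec bnd (ltnSn M) (ltn0Sn M).
have cst' : forall j : 'I_M.+2, bcol (g j) = bcol (g ord0).
  move=> j; apply: val_inj => /=.
  have jl : (j <= M.+1)%N by rewrite -ltnS ltn_ord.
  have := cst j jl; rewrite /F inord_val.
  by have -> : (inord 0 : 'I_M.+2) = ord0 by apply: val_inj; rewrite /= inordK.
exists (bcol (g ord0)).
apply/setP => i; apply/idP/idP.
- move=> iJ; have [giJ gil] := gP (blev i).
  have ei : g (blev i) = i by apply: injl.
  apply/imsetP; exists (blev i) => //.
  by rewrite -{1}(idxK i) (bp i iJ) -(cst' (blev i)) ei.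
- case/imsetP => j _ ->; have [gjJ gjl] := gP j.
  suff <- : g j = idx (inr (bcol (g ord0), j)) by [].
  by rewrite -(idxK (g j)) (bp _ gjJ) gjl cst'.
Qed.


Lemma lev_pp i : (pp i).2 = (lev (pt i))%:R.
Proof. exact: pp2. Qed.

Lemma natR_inj (a b : nat) : (a%:R : R) = b%:R -> a = b.
Proof. by move/eqP; rewrite eqr_nat => /eqP. Qed.

Lemma pp_inj : injective pp.
Proof.
move=> i j e.
rewrite -(idxK i) -(idxK j); congr idx.
have e2 : lev (pt i) = lev (pt j) by apply: natR_inj; rewrite -!lev_pp e.
move: e e2; rewrite /pp.
case: (pt i) => [[a x]|[s jj]]; case: (pt j) => [[a' x']|[s' jj']] //= [e1 _] e2.
- have ex : (x : nat) = x' by apply: natR_inj.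
  have ea : (a : nat) = a' by lia.
  by congr (inl (_, _)); apply: val_inj.
- lia.
- lia.
- have es : (s : nat) = s'.
    have : ((4 * s)%:R : R) = (4 * s')%:R by apply: (addIr (2^-1 : R)).
    move/natR_inj; lia.
  have ej : (jj : nat) = jj' by lia.
  by congr (inr (_, _)); apply: val_inj.
Qed.

Lemma colset_blue s i : i \in colset s -> cc i = ord0.
Proof. by case/imsetP => j _ ->; rewrite /cc ptK. Qed.

Lemma colset_mem s i : i \in colset s -> exists j, pt i = inr (s, j).
Proof. by case/imsetP => j _ ->; exists j; rewrite ptK. Qed.

Lemma colset_island s : mono_island pp cc (colset s).
Proof.
split.
  by move=> i j /colset_blue -> /colset_blue ->.
move=> j h.
have ex : (pp j).1 = (4 * s)%:R + 2^-1.
  apply: (hull_eq1 h) => i /colset_mem [jj E]; by rewrite (blue_x E).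
move: ex; rewrite /pp; case E: (pt j) => [[a x]|[s' jj]] /= ex.
- exfalso.
  have : ((2 * x)%:R : R) = (8 * s + 1)%:R.
    by rewrite natrD !natrM ex; field.
  by move/natR_inj/(congr1 odd); rewrite oddD !oddM.
- have es : (s' : nat) = s.
    have : ((4 * s')%:R : R) = (4 * s)%:R by apply: (addIr (2^-1 : R)).
    move/natR_inj; lia.
  have -> : j = idx (inr (s, jj)) by rewrite -(idxK j) E; congr (idx (inr (_, _))); apply: val_inj.
  by apply/imsetP; exists jj.
Qed.

Lemma single_island u : mono_island pp cc [set u].
Proof.
split.
  by move=> i j; rewrite !inE => /eqP -> /eqP ->.
move=> j h; rewrite inE; apply/eqP; apply: pp_inj.
have e1 := hull_eq1 (c := (pp u).1) h.
have e2 := hull_eq2 (c := (pp u).2) h.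
rewrite [pp j]surjective_pairing [pp u]surjective_pairing e1 ?e2 //;
  by move=> i; rewrite inE => /eqP ->.
Qed.


Definition Gprop (I : {set 'I_nn}) :=
  (forall x, x \in I -> cc x != ord0) \/ exists s, I = colset s.

Lemma blue_in_colset (J : {set 'I_nn}) z : (forall i, i \in J -> cc i = ord0) -> z \in J ->
  z \in colset (bcol z).
Proof.
move=> bl zJ; apply/imsetP; exists (blev z) => //.
by rewrite -{1}(idxK z) (blue_pt bl zJ).
Qed.

Lemma greedy_inv Is : overlap_greedy_output pp cc Is ->
  forall t, (t < size Is)%N -> Gprop (nth set0 Is t).
Proof.
move=> [gr _].
elim/ltn_ind => t IH tS.
move: (gr t tS) => /= [Cne [[monoI islI] mx]].
case: (boolP [forall x in nth set0 Is t, cc x != ord0]) => h.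
  by left => x xI; exact: (forall_inP h x xI).
right.
have [x0 x0I /negPn /eqP cx0] := forall_inPn h.
have blI : forall x, x \in nth set0 Is t -> cc x = ord0.
  by move=> x xI; rewrite (monoI x x0).
case: (boolP [exists s, [disjoint colset s & covered Is t]]) => hd.
  have [s ds] := existsP hd.
  have [le _] := mx (colset s) (colset_island s).
  rewrite (setDidPl ds) card_colset in le.
  have cI : (M.+2 <= #|nth set0 Is t|)%N.
    exact: (leq_trans le (subset_leq_card (subsetDl _ _))).
  exact: BI islI blI cI.
exfalso.
have allC : forall s, colset s \subset covered Is t.
  move=> s; move: hd; rewrite negb_exists => /forallP /(_ s).
  case/pred0Pn => y /andP [ys yC].
  have [t' lt' yt'] := mem_covered Is t y yC.
  have t't : (t' < t)%N by apply: (leq_trans lt'); rewrite geq_minl.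
  have t'S : (t' < size Is)%N by apply: (leq_trans lt'); rewrite geq_minr.
  case: (IH t' t't t'S) => [h1|[s' e']].
    by move: (h1 y yt'); rewrite (colset_blue ys) eqxx.
  rewrite e' in yt'.
  have [j1 E1] := colset_mem ys; have [j2 E2] := colset_mem yt'.
  have ess : s = s' by move: E1; rewrite E2 => [[]].
  apply/subsetP => z zs; apply/mem_covered; exists t' => //.
  by rewrite e' -ess.
have [u _ uC] : exists2 u, u \in [set: 'I_nn] & u \notin covered Is t.
  by apply/subsetPn; rewrite subTset.
have [le _] := mx [set u] (single_island u).
have e0 : nth set0 Is t :\: covered Is t = set0.
  apply/setP => z; rewrite !inE; apply/negbTE/negP => /andP [zC zI].
  have := allC (bcol z); move/subsetP/(_ z (blue_in_colset blI zI)).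
  by rewrite (negbTE zC).
have e1 : [set u] :\: covered Is t = [set u].
  by apply/setP => z; rewrite !inE; case: (eqVneq z u) => [->|]; rewrite ?uC ?andbT ?andbF.
by move: le; rewrite e0 e1 cards0 cards1.
Qed.


Definition Lp (a s : 'I_M.+1) := idx (inl (a, inord (4 * s))).
Definition Rp (a s : 'I_M.+1) := idx (inl (a, inord (4 * s + 1))).
Definition Dp (a s : 'I_M.+1) := idx (inr (s, inord a)).
Definition Up (a s : 'I_M.+1) := idx (inr (s, inord a.+1)).

Lemma s4X (s : 'I_M.+1) : (4 * s + 1 < X)%N.
Proof. have := ltn_ord s; rewrite /X; lia. Qed.

Lemma ppL a s : pp (Lp a s) = ((4 * s)%:R : R, (2 * a + 2)%:R : R).
Proof. rewrite /pp /Lp ptK /= inordK //; have := s4X s; rewrite /X; lia. Qed.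
Lemma ppR a s : pp (Rp a s) = ((4 * s + 1)%:R : R, (2 * a + 2)%:R : R).
Proof. rewrite /pp /Rp ptK /= inordK //; exact: s4X. Qed.
Lemma ppD a s : pp (Dp a s) = ((4 * s)%:R + 2^-1 : R, (2 * a + 1)%:R : R).
Proof. rewrite /pp /Dp ptK /= inordK //; have := ltn_ord a; lia. Qed.
Lemma ppU a s : pp (Up a s) = ((4 * s)%:R + 2^-1 : R, (2 * a.+1 + 1)%:R : R).
Proof. rewrite /pp /Up ptK /= inordK //; have := ltn_ord a; lia. Qed.
Lemma ccR a s : cc (Rp a s) = inord a.+1. Proof. by rewrite /cc /Rp ptK. Qed.
Lemma ccL a s : cc (Lp a s) = inord a.+1. Proof. by rewrite /cc /Lp ptK. Qed.
Lemma ccD a s : cc (Dp a s) = ord0. Proof. by rewrite /cc /Dp ptK. Qed.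
Lemma ccU a s : cc (Up a s) = ord0. Proof. by rewrite /cc /Up ptK. Qed.

Lemma inordS_inj (a a' : 'I_M.+1) : (inord a.+1 : 'I_M.+2) = inord a'.+1 -> a = a'.
Proof.
have h1 : (a.+1 < M.+2)%N by rewrite ltnS ltn_ord.
have h2 : (a'.+1 < M.+2)%N by rewrite ltnS ltn_ord.
move/(congr1 val) => /=; rewrite !inordK //.
by move=> [e]; apply: val_inj.
Qed.

Lemma inordS_ne0 (a : 'I_M.+1) : (inord a.+1 : 'I_M.+2) != ord0.
Proof. by apply/eqP => /(congr1 val); rewrite /= inordK // ltnS ltn_ord. Qed.

Lemma ge1_neq0 (x : R) : 1 <= x -> x != 0.
Proof. by move=> h; rewrite gt_eqF //; lra. Qed.

Lemma hull_eqpt (I : {set 'I_nn}) q q' : in_hull pp I q -> q = q' -> in_hull pp I q'.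
Proof. by move=> h <-. Qed.

Lemma Qbound Is Q : overlap_greedy_output pp cc Is -> compatible pp Q Is ->
  (M.+1 * M.+1 <= #|Q|)%N.
Proof.
move=> gr [islQ [F [QF [_ [covF [subF hd]]]]]].
have Ginv := greedy_inv gr.
have inQt : forall J, J \in Q -> exists2 t, (t < size Is)%N & J \subset nth set0 Is t.
  move=> J; rewrite QF => /bigcupP [t _ JF]; exists t => //.
  apply: subset_trans (subF t (ltn_ord t)); apply/subsetP => x xJ.
  by apply/bigcupP; exists J.
have monoQ : forall J, J \in Q -> forall x y, x \in J -> y \in J -> cc x = cc y.
  move=> J JQ x y xJ yJ; have [t tS sub] := inQt J JQ.
  move: (gr.1 t tS) => /= [_ [[mono _] _]].
  by apply: mono; apply: (subsetP sub).
have blueQ : forall J, J \in Q -> forall y, y \in J -> cc y = ord0 ->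
    exists s, J \subset colset s.
  move=> J JQ y yJ cy; have [t tS sub] := inQt J JQ.
  case: (Ginv t tS) => [h|[s e]].
    by move: (h y (subsetP sub y yJ)); rewrite cy eqxx.
  by exists s; rewrite -e.
have covQ : forall x, exists2 J, J \in Q & x \in J.
  move=> x; have : x \in covered Is (size Is) by rewrite gr.2 inE.
  rewrite /covered take_size -covF => /bigcupP [t _ /bigcupP [J JF xJ]].
  by exists J => //; rewrite QF; apply/bigcupP; exists t.
have uniqQ : forall J K x, J \in Q -> K \in Q -> x \in J -> x \in K -> J = K.
  move=> J K x JQ KQ xJ xK; apply/eqP; apply/negPn/negP => ne.
  apply: (hd J K JQ KQ ne); exists (pp x); split; exact: hull_pt.
pose piece x := odflt set0 [pick J in Q | x \in J].
have pieceP : forall x, piece x \in Q /\ x \in piece x.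
  move=> x; rewrite /piece; case: pickP => [J /andP [JQ xJ]| none] //=.
  have [J JQ xJ] := covQ x; by move: (none J); rewrite JQ xJ.
have pieceU : forall J x, J \in Q -> x \in J -> piece x = J.
  move=> J x JQ xJ; have [pQ px] := pieceP x; exact: uniqQ pQ JQ px xJ.
have h0 : (0 : R) <= 2^-1 by rewrite invr_ge0 ler0n.
have h1 : (2^-1 : R) <= 1 by rewrite invf_le1 ?ler1n ?ltr0n.
have cross : forall a s, piece (Lp a s) = piece (Rp a s) ->
    piece (Dp a s) = piece (Up a s) -> False.
  move=> a s eLR eDU.
  have [JQ LJ] := pieceP (Lp a s); have [KQ DK] := pieceP (Dp a s).
  have RJ : Rp a s \in piece (Lp a s) by rewrite eLR; exact: (pieceP _).2.
  have UK : Up a s \in piece (Dp a s) by rewrite eDU; exact: (pieceP _).2.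
  have ne : piece (Lp a s) != piece (Dp a s).
    apply/eqP => e; rewrite -e in DK.
    have := monoQ _ JQ _ _ LJ DK; rewrite ccL ccD => /eqP.
    by rewrite (negbTE (inordS_ne0 a)).
  apply: (hd _ _ JQ KQ ne).
  exists ((4 * s)%:R + 2^-1, (2 * a + 2)%:R); split.
  - apply: (hull_eqpt (hull_conv (hull_pt pp LJ) (hull_pt pp RJ) h0 h1)).
    rewrite ppL ppR /=; congr pair; rewrite ?natrD; field; by [].
  - apply: (hull_eqpt (hull_conv (hull_pt pp DK) (hull_pt pp UK) h0 h1)).
    rewrite ppD ppU /=; congr pair; first by field.
    have E : (2 * a + 2 = (2 * a + 1) + 1)%N by lia.
    have E2 : (2 * a.+1 + 1 = (2 * a + 1) + 2)%N by lia.
    by rewrite E E2 !natrD; field.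
have rowA : forall P a (s s' : 'I_M.+1), P \in Q -> (s < s')%N -> Rp a s \in P ->
    Rp a s' \in P -> piece (Lp a s') = piece (Rp a s').
  move=> P a s s' PQ ss' R1 R2.
  have LP : Lp a s' \in P.
    apply: (islQ P PQ).
    have ds : (1 : R) <= (s' : nat)%:R - (s : nat)%:R.
      by rewrite lerBrDl natr1 ler_nat.
    pose l : R := (4 * ((s' : nat)%:R - (s : nat)%:R))^-1.
    have l0 : 0 <= l by rewrite /l invr_ge0; lra.
    have l1 : l <= 1 by rewrite /l invf_le1; lra.
    apply: (hull_eqpt (hull_conv (hull_pt pp R1) (hull_pt pp R2) l0 l1)).
    rewrite ppL !ppR /=; congr pair; last by field.
    by rewrite /l !natrD; field; apply: ge1_neq0.
  by rewrite (pieceU P _ PQ LP) (pieceU P _ PQ R2).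
have colB : forall P (a a' s : 'I_M.+1), P \in Q -> (a < a')%N -> Up a s \in P ->
    Up a' s \in P -> piece (Dp a' s) = piece (Up a' s).
  move=> P a a' s PQ aa' U1 U2.
  have DP : Dp a' s \in P.
    apply: (islQ P PQ).
    have ds : (1 : R) <= (a' : nat)%:R - (a : nat)%:R.
      by rewrite lerBrDl natr1 ler_nat.
    pose l : R := ((a' : nat)%:R - (a : nat)%:R)^-1.
    have l0 : 0 <= l by rewrite /l invr_ge0; lra.
    have l1 : l <= 1 by rewrite /l invf_le1; lra.
    apply: (hull_eqpt (hull_conv (hull_pt pp U1) (hull_pt pp U2) l0 l1)).
    rewrite ppD !ppU /=; congr pair; first by field.
    by rewrite /l !natrD; field; apply: ge1_neq0.
  by rewrite (pieceU P _ PQ DP) (pieceU P _ PQ U2).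
pose phi (x : 'I_M.+1 * 'I_M.+1) :=
  if piece (Lp x.1 x.2) != piece (Rp x.1 x.2) then piece (Rp x.1 x.2)
  else piece (Up x.1 x.2).
have phiQ : forall x, phi x \in Q by move=> x; rewrite /phi; case: ifP => _; exact: (pieceP _).1.
have inj : injective phi.
  move=> [a s] [a' s']; rewrite /phi /=.
  case: ifP => hx; case: ifP => hy => e.
  - have [PQ RP] := pieceP (Rp a s); have R2 : Rp a' s' \in piece (Rp a s).
      by rewrite e; exact: (pieceP _).2.
    have := monoQ _ PQ _ _ RP R2; rewrite !ccR => /inordS_inj ea; subst a'.
    case: (ltngtP s s') => ss.
    + by move: hy; rewrite (rowA _ a s s' PQ ss RP R2) eqxx.
    + by move: hx; rewrite (rowA _ a s' s PQ ss R2 RP) eqxx.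
    + by congr pair; apply: val_inj.
  - have [PQ RP] := pieceP (Rp a s); have U2 : Up a' s' \in piece (Rp a s).
      by rewrite e; exact: (pieceP _).2.
    have := monoQ _ PQ _ _ RP U2; rewrite ccR ccU => /eqP.
    by rewrite (negbTE (inordS_ne0 a)).
  - have [PQ UP] := pieceP (Up a s); have R2 : Rp a' s' \in piece (Up a s).
      by rewrite e; exact: (pieceP _).2.
    have := monoQ _ PQ _ _ R2 UP; rewrite ccR ccU => /eqP.
    by rewrite (negbTE (inordS_ne0 a')).
  - have [PQ UP] := pieceP (Up a s); have U2 : Up a' s' \in piece (Up a s).
      by rewrite e; exact: (pieceP _).2.
    have [s'' sub] := blueQ _ PQ _ UP (ccU a s).
    have [j1 E1] := colset_mem (subsetP sub _ UP).
    have [j2 E2] := colset_mem (subsetP sub _ U2).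
    have e1 : s = s'' by move: E1; rewrite /Up ptK; case=> ->.
    have e2 : s' = s'' by move: E2; rewrite /Up ptK; case=> ->.
    subst s s'.
    move/negbFE/eqP: hx => hx; move/negbFE/eqP: hy => hy.
    case: (ltngtP a a') => aa.
    + by have := cross a' s'' hy (colB _ a a' s'' PQ aa UP U2).
    + by have := cross a s'' hx (colB _ a' a s'' PQ aa U2 UP).
    + by congr pair; apply: val_inj.
have : #|[set phi x | x in [set: 'I_M.+1 * 'I_M.+1]]| = (M.+1 * M.+1)%N.
  by rewrite card_imset // cardsT card_prod card_ord.
move=> <-; apply: subset_leq_card; apply/subsetP => J /imsetP [x _ ->]; exact: phiQ.
Qed.


Lemma part_lb P : island_partition pp cc P -> (M.+1 <= #|P|)%N.
Proof.
move=> [/and3P [/eqP cov triv _] [mono _]].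
pose f (a : 'I_M.+1) := pblock P (Lp a ord0).
have fin : forall a, f a \in P by move=> a; apply: pblock_mem; rewrite cov inE.
have fmem : forall a, Lp a ord0 \in f a by move=> a; rewrite mem_pblock cov inE.
have inj : injective f.
  move=> a a' e.
  have h2 : Lp a' ord0 \in f a by rewrite e; exact: fmem.
  have := (mono (f a) (fin a)).1 _ _ (fmem a) h2.
  by rewrite !ccL => /inordS_inj.
have := card_imset [set: 'I_M.+1] inj; rewrite cardsT card_ord => <-.
by apply: subset_leq_card; apply/subsetP => B /imsetP [a _ ->].
Qed.

Definition Lset (l : nat) : {set 'I_nn} := [set j | lev (pt j) == l].
Definition P0 : {set {set 'I_nn}} :=
  [set Lset l | l : 'I_(2 * M + 4) & Lset l != set0].

Lemma lev_lt j : (lev (pt j) < 2 * M + 4)%N.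
Proof.
case: (pt j) => [[a x]|[s jj]] /=.
  by have := ltn_ord a; lia.
by have := ltn_ord jj; lia.
Qed.

Lemma lev_cc i j : lev (pt i) = lev (pt j) -> cc i = cc j.
Proof.
rewrite /cc; case: (pt i) => [[a x]|[s jj]]; case: (pt j) => [[a' x']|[s' jj']] //= e.
- have ea : (a : nat) = a' by lia.
  by have -> : a = a' by apply: val_inj.
- lia.
- lia.
Qed.

Lemma P0_ip : island_partition pp cc P0.
Proof.
have LsetE : forall B, B \in P0 -> exists l : 'I_(2 * M + 4), B = Lset l.
  by move=> B /imsetP [l _ ->]; exists l.
have hullL : forall (l : nat) q, in_hull pp (Lset l) q -> q.2 = l%:R.
  move=> l q h; apply: (hull_eq2 h) => i; rewrite inE => /eqP <-; exact: lev_pp.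
split; [|split].
- apply/and3P; split.
  + apply/eqP/setP => j; rewrite inE; apply/bigcupP.
    exists (Lset (Ordinal (lev_lt j))); last by rewrite inE.
    apply/imsetP; exists (Ordinal (lev_lt j)) => //; rewrite inE.
    by apply/set0Pn; exists j; rewrite inE.
  + apply/trivIsetP => A B /LsetE [l ->] /LsetE [l' ->] ne.
    apply/pred0P => x /=; rewrite !inE; apply/negP => /andP [/eqP e1 /eqP e2].
    by move: ne; rewrite -e1 -e2 eqxx.
  + apply/imsetP => [[l]]; rewrite inE => ne e; by rewrite -e eqxx in ne.
- move=> I /LsetE [l ->]; split.
    by move=> i j; rewrite !inE => /eqP e1 /eqP e2; apply: lev_cc; rewrite e1 e2.
  move=> j /hullL; rewrite lev_pp => /natR_inj e.
  by rewrite inE e.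
- move=> I J /LsetE [l ->] /LsetE [l' ->] ne [q [h1 h2]].
  have e : (l : nat) = l' by apply: natR_inj; rewrite -(hullL _ _ h1) -(hullL _ _ h2).
  by move: ne; rewrite e eqxx.
Qed.

Lemma P0_card : (#|P0| <= 2 * M + 4)%N.
Proof.
apply: (leq_trans (leq_imset_card _ _)).
by apply: (leq_trans (max_card _)); rewrite card_ord.
Qed.

Lemma nn_val : nn = (M.+1 * X + M.+1 * M.+2)%N.
Proof. by rewrite /nn card_sum !card_prod !card_ord. Qed.

End Constr.
Unset Implicit Arguments.
Lemma opt_ex (R : realType) n k (p : 'I_n -> R * R) (col : 'I_n -> 'I_k) m :
  (exists P, island_partition p col P /\ #|P| = m) ->
  exists o, is_OptP p col o /\ (o <= m)%N.
Proof.
elim/ltn_ind: m => m IH [P [hP cP]].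
case: (classic (exists P', island_partition p col P' /\ (#|P'| < m)%N)).
  move=> [P' [h' c']].
  have [o [oo om]] := IH #|P'| c' (ex_intro _ P' (conj h' erefl)).
  by exists o; split => //; apply: ltnW (leq_ltn_trans om c').
move=> nP; exists m; split => //; split; first by exists P.
move=> P' h'; rewrite leqNgt; apply/negP => c'; apply: nP; by exists P'.
Qed.

Theorem lemma4 (R : realType) :
  exists c : R, 0 < c /\
  forall N : nat, exists (n k : nat) (p : 'I_n -> R * R) (col : 'I_n -> 'I_k)
                         (opt : nat),
    (2 <= k)%N /\ injective p /\ is_OptP p col opt /\
    (N <= n)%N /\ (N <= opt)%N /\
        forall (Is : seq {set 'I_n}) (Q : {set {set 'I_n}}),
          overlap_greedy_output p col Is -> compatible p Q Is ->
          c * Num.max (opt%:R) (Num.sqrt (n%:R)) * opt%:R <= #|Q|%:R.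
Proof.
exists (16^-1); split; first by rewrite invr_gt0 ltr0n.
move=> N.
have [o [oOpt oub]] := @opt_ex R _ _ _ _ _ (ex_intro _ (P0 N) (conj (P0_ip R N) erefl)).
have olb : (N.+1 <= o)%N.
  by have [[P [hP <-]] _] := oOpt; exact: (part_lb hP).
have ou : (o <= 2 * N + 4)%N := leq_trans oub (P0_card N).
exists (nn N), N.+2, (@pp R N), (@cc N), o.
split; first by [].
split; first exact: pp_inj.
split; first exact: oOpt.
split; first by rewrite nn_val /X; lia.
split; first by lia.
move=> Is Q gr cp.
have hQ := Qbound gr cp.
set m : R := (N.+1)%:R.
have m0 : 0 <= m by rewrite ler0n.
have hQ' : m * m <= #|Q|%:R by rewrite -natrM ler_nat.
have ho : o%:R <= 4 * m.
  have : (o%:R : R) <= (4 * N.+1)%:R by rewrite ler_nat; lia.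
  by rewrite natrM.
have o0 : (0 : R) <= o%:R by rewrite ler0n.
have hs : Num.sqrt ((nn N)%:R) <= 4 * m.
  have e : (4 * m) ^+ 2 = ((16 * N.+1 * N.+1)%N)%:R.
    by rewrite /m !natrM expr2; ring.
  have : Num.sqrt ((nn N)%:R) <= Num.sqrt ((4 * m) ^+ 2).
    apply: ler_wsqrtr; rewrite e ler_nat nn_val /X; lia.
  by rewrite sqrtr_sqr ger0_norm //; lra.
set mx := Num.max _ _.
have mx0 : 0 <= mx by rewrite /mx le_max o0.
have mxb : mx <= 4 * m by rewrite /mx ge_max ho hs.
have hp : mx * o%:R <= (4 * m) * (4 * m) by apply: ler_pM.
have c16 : (16^-1 : R) * 16 = 1 by field.
rewrite -mulrA.
have : 16^-1 * (mx * o%:R) <= 16^-1 * ((4 * m) * (4 * m)).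
  by apply: ler_wpM2l => //; rewrite invr_ge0 ler0n.
have -> : 16^-1 * ((4 * m) * (4 * m)) = m * m :> R by field.
lra.
Qed.
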